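(* Let $\mathcal{P}=\{P_1,\ldots,P_n\}$, let $\mathcal{Q}\subseteq 2^{\mathcal{P}}$ and let $\mathcal{F}\subseteq 2^{\mathcal{P}}$ be a fail-prone system. Consider the ideal $I=\langle \xi_{\mathcal{Q}_{\bar X}},\ \xi_{\mathcal{Q}_{\bar Y}},\ \sigma\rangle\subseteq \mathbb{B}(\bar X,\bar Y)$ and let $\mathcal{G}$ be a Gröbner basis for $I$. If $|SM(\mathcal{G})|=|\mathcal{Q}|^2$, then $\mathcal{Q}$ fulfills (classical) consistency, i.e. $Q_1\cap Q_2\neq\emptyset$ for all $Q_1,Q_2\in\mathcal{Q}$.
   Context: $\mathbb{B}=\mathbb{F}_2$ and $\mathbb{B}(X_1,\ldots,X_n,Y_1,\ldots,Y_n)=\mathbb{B}[\bar X,\bar Y]/\langle X_i^2-X_i, Y_i^2-Y_i\ (1\le i\le n)\rangle$ is the Boolean polynomial ring; $\bar X=\{X_1,\ldots,X_n\}$, $\bar Y=\{Y_1,\ldots,Y_n\}$. The map $\varphi:2^{\mathcal{P}}\to\mathbb{B}^n$ sends $S$ to its indicator vector ($\varphi(S)_i=1$ iff $P_i\in S$); $\varphi(\mathcal{A})=\{\varphi(A):A\in\mathcal{A}\}$. For $S\subseteq\mathcal{P}$ the characteristic polynomial is $\xi_S(Z_1,\ldots,Z_n)=\prod_{i=1}^n(1+Z_i+\varphi(S)_i)$, and for $\mathcal{A}\subseteq 2^{\mathcal{P}}$ and a block of variables $\bar Z$, $\xi_{\mathcal{A}_{\bar Z}}=\prod_{A\in\mathcal{A}}(\xi_A(\bar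 Z)+1)$. $\sigma(\bar X,\bar Y)=\prod_{i=1}^n(X_iY_i+1)$. A fail-prone system is a collection of subsets of $\mathcal{P}$ none of which is contained in another. Monomials are ordered by the lexicographic order with $\bar Y<\bar X$ as blocks and $X_n\prec\cdots\prec X_1$, $Y_n\prec\cdots\prec Y_1$ within blocks. $LM(f)$ is the largest monomial of $f$. A Gröbner basis of $I$ is a generating set $\mathcal{G}$ of $I$ such that for every nonzero $f\in I$ some $g\in\mathcal{G}$ has $LM(g)\mid LM(f)$. $SM(\mathcal{G})$, the set of standard monomials, is the set of multilinear monomials (each variable with exponent $0$ or $1$) not lying in the ideal generated by $\{LM(f):f\in I\}$. *)

(* Defs.v *)
From HB Require Import structures.
From mathcomp Require Import all_boot all_order all_algebra.
Set Implicit Arguments. Unset Strict Implicit. Unset Printing Implicit Defensive.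
Import GRing.Theory.
Local Open Scope ring_scope.

(* Participants P_1..P_n are 'I_n (P_{i+1} <-> i).  Variables of the Boolean
   ring B(X_1..X_n,Y_1..Y_n): inl i = X_{i+1}, inr i = Y_{i+1}. *)
Definition bvar (n : nat) := ('I_n + 'I_n)%type.

(* A multilinear monomial is the set of variables occurring in it. *)
Definition bmon (n : nat) := {set bvar n}.

(* The Boolean polynomial ring B[X,Y]/<X_i^2-X_i, Y_i^2-Y_i>, represented by
   the (unique) multilinear representatives: coefficient functions on
   multilinear monomials, with coefficients in F_2. *)
Definition bpoly (n : nat) := {ffun bmon n -> 'F_2}.

(* multiplication: monomials multiply by union (since Z^2 = Z) *)
Definition bmul n (f g : bpoly n) : bpoly n :=
  [ffun S : bmon n => \sum_(A : bmon n) \sum_(B : bmon n | A :|: B == S) f A * g B].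
Definition bone n : bpoly n := [ffun S : bmon n => (S == set0)%:R].
Definition bconst n (c : 'F_2) : bpoly n := [ffun S : bmon n => if S == set0 then c else 0].
Definition bX n (v : bvar n) : bpoly n := [ffun S : bmon n => (S == [set v])%:R].
Definition bprod n (I : finType) (P : pred I) (F : I -> bpoly n) : bpoly n :=
  \big[@bmul n/bone n]_(i | P i) F i.

Definition xi n (blk : 'I_n -> bvar n) (S : {set 'I_n}) : bpoly n :=
  bprod xpredT (fun i : 'I_n => bone n + bX (blk i) + bconst n (i \in S)%:R).

Definition xiFam n (blk : 'I_n -> bvar n) (Q : {set {set 'I_n}}) : bpoly n :=
  bprod (mem Q) (fun A => xi blk A + bone n).

Definition sigma n : bpoly n :=
  bprod xpredT (fun i : 'I_n => bmul (bX (inl i)) (bX (inr i)) + bone n).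

Definition in_ideal3 n (g1 g2 g3 f : bpoly n) : bool :=
  [exists h : bpoly n * bpoly n * bpoly n,
     f == bmul h.1.1 g1 + bmul h.1.2 g2 + bmul h.2 g3].

(* Monomial order: lex, block Y < block X, X_n < ... < X_1, Y_n < ... < Y_1.
   rank: smaller rank = larger variable; X_1 has rank 0, Y_n rank 2n-1. *)
Definition vrank n (v : bvar n) : nat :=
  match v with inl i => val i | inr i => (n + val i)%N end.

Definition lexlt n (M1 M2 : bmon n) : bool :=
  [exists v : bvar n, (v \in M2) && (v \notin M1) &&
     [forall w : bvar n, (vrank w < vrank v)%N ==> ((w \in M1) == (w \in M2))]].

Definition is_LM n (f : bpoly n) (M : bmon n) : bool :=
  (f M != 0) && [forall M' : bmon n, (f M' != 0) ==> (M' == M) || lexlt M' M].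

(* monomial divisibility for multilinear monomials is inclusion *)
Definition mdvd n (L M : bmon n) : bool := L \subset M.

Definition is_groebner n (G : {set bpoly n}) (inI : pred (bpoly n)) : Prop :=
  (forall f : bpoly n,
      inI f <-> exists h : {ffun bpoly n -> bpoly n}, f = \sum_(g in G) bmul (h g) g)
  /\ (forall f : bpoly n, inI f -> f != 0 ->
        exists2 g, g \in G & exists L Lf, [/\ is_LM g L, is_LM f Lf & mdvd L Lf]).

(* standard monomials: multilinear monomials not in <LM(f) : f in I>
   (a monomial lies in a monomial ideal iff some generator divides it) *)
Definition SM n (inI : pred (bpoly n)) : {set bmon n} :=
  [set M : bmon n | ~~ [exists f : bpoly n, inI f && (f != 0) &&
                         [exists L : bmon n, is_LM f L && mdvd L M]]].

Definition fail_prone n (F : {set {set 'I_n}}) : Prop :=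
  forall A B, A \in F -> B \in F -> A \subset B -> A = B.

(* Main.v *)
Require Import Defs.
From mathcomp Require Import all_boot all_order all_algebra.
Import GRing.Theory.
Local Open Scope ring_scope.
Set Implicit Arguments. Unset Strict Implicit.

Lemma F2_01 (x : 'F_2) : x != 0 -> x = 1.
Proof. by case: x => [[|[|]]] //= ? _; apply/val_inj. Qed.
Lemma F2_11 : (1 + 1 : 'F_2) = 0. Proof. by apply/val_inj. Qed.
Lemma F2_10 : (1 : 'F_2) != 0. Proof. by []. Qed.

Section Ev.
Variable n : nat.
Implicit Types f g : bpoly n.

Definition ev f (a : bmon n) : 'F_2 := \sum_(S : bmon n | S \subset a) f S.

Lemma ev_single (S0 : bmon n) (c : 'F_2) (a : bmon n) :
  \sum_(S : bmon n | S \subset a) (if S == S0 then c else 0) = if S0 \subset a then c else 0.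
Proof.
case: ifP => h.
  rewrite (bigD1 S0) //= eqxx big1 ?addr0 // => S /andP[_ /negbTE ->] //.
by rewrite big1 // => S hS; case: eqP => // e; move: hS; rewrite e h.

Qed.

Lemma ev_one a : ev (bone n) a = 1.
Proof.
rewrite /ev (eq_bigr (fun S => if S == set0 then 1 else 0)) ?ev_single ?sub0set //.
by move=> S _; rewrite ffunE; case: eqP.

Qed.

Lemma ev_const c a : ev (bconst n c) a = c.
Proof.
by rewrite /ev (eq_bigr (fun S => if S == set0 then c else 0)) ?ev_single ?sub0set // => S _; rewrite ffunE.

Qed.

Lemma ev_X v a : ev (bX v) a = (v \in a)%:R.
Proof.
rewrite /ev (eq_bigr (fun S => if S == [set v] then 1 else 0)) ?ev_single ?sub1set.
  by case: (v \in a).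
by move=> S _; rewrite ffunE; case: eqP.

Qed.

Lemma ev_add f g a : ev (f + g) a = ev f a + ev g a.
Proof. by rewrite /ev -big_split /=; apply: eq_bigr => S _; rewrite ffunE. Qed.

Lemma ev_sub f g a : ev (f - g) a = ev f a - ev g a.
Proof. by rewrite /ev -sumrB /=; apply: eq_bigr => S _; rewrite !ffunE. Qed.

Lemma ev_zero a : ev 0 a = 0.
Proof. by rewrite /ev big1 // => S _; rewrite ffunE. Qed.

Lemma ev_mul f g a : ev (bmul f g) a = ev f a * ev g a.
Proof.
rewrite /ev big_distrlr /=.
rewrite (eq_bigr (fun S => \sum_(A : bmon n) \sum_(B : bmon n) if A :|: B == S then f A * g B else 0)); last first.
  by move=> S _; rewrite ffunE; apply: eq_bigr => A _; rewrite big_mkcond.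
rewrite exchange_big /= [RHS]big_mkcond /=; apply: eq_bigr => A _.
rewrite exchange_big /=.
rewrite (eq_bigr (fun B => if A :|: B \subset a then f A * g B else 0)); last first.
  move=> B _; rewrite -ev_single; apply: eq_bigr => S _; by rewrite eq_sym.
case: ifP => hA.
  by rewrite [RHS]big_mkcond /=; apply: eq_bigr => B _; rewrite subUset hA.
by rewrite big1 // => B _; rewrite subUset hA.
Qed.

Lemma ev_prod (I : finType) (P : pred I) (F : I -> bpoly n) a :
  ev (bprod P F) a = \prod_(i | P i) ev (F i) a.
Proof.
rewrite /bprod; apply: (big_morph (fun f => ev f a)); [exact: (fun x y => ev_mul x y a) | exact: ev_one].
Qed.
End Ev.
Section Ev2.
Variable n : nat.
Implicit Types f g : bpoly n.

Definition delta (b : bmon n) : bpoly n :=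
  bprod xpredT (fun v => if v \in b then bX v else bone n + bX v).

Lemma ev_delta b a : ev (delta b) a = (a == b)%:R.
Proof.
rewrite /delta ev_prod; case: eqP => [->|ne].
  rewrite big1 // => v _; case: ifP => h; rewrite ?ev_add ?ev_one ev_X h //.
  by rewrite addr0.
have [v hv] : exists v, (v \in a) != (v \in b).
  apply/existsP; apply: contraNT (introN eqP ne) => /existsPn h.
  by apply/eqP/setP => v; apply/eqP; have := h v; rewrite negbK.
rewrite (bigD1 v) //=; case: ifP hv => h; rewrite ?ev_add ?ev_one ev_X; move: h;
  case: (v \in a); case: (v \in b) => //= _ _; by rewrite ?F2_11 ?addr0 mul0r.
Qed.

Lemma ev_sum (I : finType) (P : pred I) (F : I -> bpoly n) a :
  ev (\sum_(i | P i) F i) a = \sum_(i | P i) ev (F i) a.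
Proof.
apply: (big_morph (fun f => ev f a)); [exact: (fun x y => ev_add x y a) | exact: ev_zero].
Qed.

Definition evF f : bpoly n := [ffun a => ev f a].

Lemma evF_surj (H : bpoly n) : exists f, evF f = H.
Proof.
exists (\sum_(b | H b != 0) delta b); apply/ffunP => a; rewrite ffunE ev_sum.
under eq_bigr do rewrite ev_delta.
case: (boolP (H a != 0)) => h.
  rewrite (bigD1 a) //= eqxx big1 ?addr0 ?(F2_01 h) // => b /andP[_ hb].
  by rewrite eq_sym (negbTE hb).
rewrite big1; first by move: h; rewrite negbK => /eqP ->.
by move=> b hb; case: eqP => // e; rewrite e hb in h.
Qed.

Lemma evF_inj : injective evF.
Proof.
have h : {in predT &, injective evF}.
  apply/image_injP; rewrite -imset_card; apply/eqP.
  have -> : [set evF x | x in predT] = setT.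
    apply/setP => H; rewrite in_setT; have [f <-] := evF_surj H.
    by apply/imsetP; exists f.
  by rewrite cardsT.
move=> x y e; exact: h.
Qed.
End Ev2.
Section Lex.
Variable n : nat.
Implicit Types M : bmon n.

Lemma vrank_inj : injective (@vrank n).
Proof.
move=> [i|i] [j|j] /=.
- by move=> e; congr inl; apply: val_inj.
- by move=> e; have := ltn_ord i; rewrite e; move: (leq_addr j n) => /leq_ltn_trans h /h; rewrite ltnn.
- by move=> e; have := ltn_ord j; rewrite -e; move: (leq_addr i n) => /leq_ltn_trans h /h; rewrite ltnn.
- by move/eqP; rewrite eqn_add2l => /eqP e; congr inr; apply: val_inj.
Qed.

Lemma lexlt_irr M : ~~ lexlt M M.
Proof. by apply/existsP => -[v /andP[/andP[-> ]]]. Qed.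

Lemma lexlt_trans M1 M2 M3 : lexlt M1 M2 -> lexlt M2 M3 -> lexlt M1 M3.
Proof.
move=> /existsP[v /andP[/andP[v2 v1] /forallP hv]] /existsP[w /andP[/andP[w3 w2] /forallP hw]].
case: (ltngtP (vrank v) (vrank w)) => c.
- apply/existsP; exists v; rewrite v1 andbT.
  have := hw v; rewrite c /= => /eqP <-; rewrite v2 /=.
  apply/forallP => u; apply/implyP => cu.
  have := hv u; rewrite cu /= => /eqP ->.
  by have := hw u; rewrite (ltn_trans cu c) /= => /eqP ->.
- apply/existsP; exists w; rewrite w3 /=.
  have := hv w; rewrite c /= => /eqP ->; rewrite w2 /=.
  apply/forallP => u; apply/implyP => cu.
  have := hw u; rewrite cu /= => /eqP <-.
  by have := hv u; rewrite (ltn_trans cu c) /= => /eqP ->.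
- by move: (vrank_inj c) v2 w2 => -> ->.
Qed.

Lemma lexlt_total M1 M2 : M1 != M2 -> lexlt M1 M2 || lexlt M2 M1.
Proof.
move=> ne.
pose D := (M1 :\: M2) :|: (M2 :\: M1).
have [v0 hv0] : exists v, v \in D.
  apply/existsP; apply: contraNT ne => /existsPn h.
  apply/eqP/setP => v; have := h v; rewrite !inE.
  by case: (v \in M1); case: (v \in M2).
case: (arg_minnP (@vrank n) hv0) => v hv hmin.
have hb : [forall w : bvar n, (vrank w < vrank v)%N ==> ((w \in M1) == (w \in M2))].
  apply/forallP => w; apply/implyP => cw; apply: contraTT cw => hw.
  rewrite -leqNgt; apply: hmin; change (w \in D); rewrite /D !inE.
  by move: hw; case: (w \in M1); case: (w \in M2).
have hb' : [forall w : bvar n, (vrank w < vrank v)%N ==> ((w \in M2) == (w \in M1))].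
  by apply/forallP => w; rewrite eq_sym; exact: (forallP hb w).
have hv2 : v \in D := hv.
move: hv2; rewrite /D !inE; case/orP => /andP[a b].
- by apply/orP; right; apply/existsP; exists v; rewrite a b hb'.
- by apply/orP; left; apply/existsP; exists v; rewrite a b hb.
Qed.

Lemma exists_LM (f : bpoly n) : f != 0 -> exists L, is_LM f L.
Proof.
move=> nz.
have [M0 hM0] : exists M, f M != 0.
  apply/existsP; apply: contraNT nz => /existsPn h.
  by apply/eqP/ffunP => M; rewrite ffunE; have := h M; rewrite negbK => /eqP.
pose cnt M := #|[set M' | lexlt M' M]|.
case: (@arg_maxnP _ M0 (fun M => f M != 0) cnt hM0) => L hL hmax.
exists L; rewrite /is_LM hL /=; apply/forallP => M; apply/implyP => hM.
case: (eqVneq M L) => //= ne.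
case/orP: (lexlt_total ne) => // lt.
have /= := hmax M hM; rewrite leqNgt => /negP; case.
apply: proper_card; apply/properP; split.
  apply/subsetP => M'; rewrite !inE => h; exact: lexlt_trans h lt.
by exists L; rewrite !inE ?lexlt_irr.
Qed.
End Lex.
Section Null.
Variable n : nat.
Variables g1 g2 g3 : bpoly n.

Lemma evF_ev (h H : bpoly n) a : evF h = H -> ev h a = H a.
Proof. by move=> <-; rewrite ffunE. Qed.

Lemma F2_cases (x : 'F_2) : x = 0 \/ x = 1.
Proof. by case: (eqVneq x 0) => [->|/F2_01 ->]; [left|right]. Qed.

Lemma nullst (f : bpoly n) :
  (forall a, ev g1 a = 0 -> ev g2 a = 0 -> ev g3 a = 0 -> ev f a = 0) ->
  in_ideal3 g1 g2 g3 f.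
Proof.
move=> hf.
have [h1 e1] := evF_surj [ffun a => if ev g1 a != 0 then ev f a else 0].
have [h2 e2] := evF_surj [ffun a => if (ev g1 a == 0) && (ev g2 a != 0) then ev f a else 0].
have [h3 e3] := evF_surj [ffun a => if (ev g1 a == 0) && (ev g2 a == 0) && (ev g3 a != 0) then ev f a else 0].
apply/existsP; exists (h1, h2, h3); apply/eqP; apply: evF_inj; apply/ffunP => a.
rewrite !ffunE /= !ev_add !ev_mul (evF_ev a e1) (evF_ev a e2) (evF_ev a e3) !ffunE.
case: (F2_cases (ev g1 a)) => E1; rewrite E1 ?eqxx /=.
  case: (F2_cases (ev g2 a)) => E2; rewrite E2 ?eqxx /=.
    case: (F2_cases (ev g3 a)) => E3; rewrite E3 ?eqxx /=.
      by rewrite !mulr0 !addr0; apply: hf.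
    by rewrite ?F2_10 /= ?mulr0 ?mul0r ?mulr1 ?addr0 ?add0r.
  by rewrite ?F2_10 /= ?mulr0 ?mul0r ?mulr1 ?addr0 ?add0r.
by rewrite ?F2_10 /= ?mulr0 ?mul0r ?mulr1 ?addr0 ?add0r.
Qed.

Definition Vset : {set bmon n} :=
  [set a | (ev g1 a == 0) && (ev g2 a == 0) && (ev g3 a == 0)].

Definition pS (S : {set bmon n}) : bpoly n := [ffun M => (M \in S)%:R].

Lemma SM_le : (#|SM (in_ideal3 g1 g2 g3)| <= #|Vset|)%N.
Proof.
set I := in_ideal3 g1 g2 g3.
pose phi (S : {set bmon n}) := [set a in Vset | ev (pS S) a != 0].
have inj : {in powerset (SM I) &, injective phi}.
  move=> S T; rewrite !inE => hS hT e.
  pose q := pS S - pS T.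
  have qI : I q.
    apply: nullst => a h1 h2 h3.
    have aV : a \in Vset by rewrite inE h1 h2 h3 eqxx.
    move/setP/(_ a): e; rewrite /phi !inE h1 h2 h3 eqxx /= => e'.
    rewrite ev_sub; case: (F2_cases (ev (pS S) a)) e' => ->;
      case: (F2_cases (ev (pS T) a)) => -> //=; by rewrite subrr.
  have q0 : q = 0.
    apply/eqP; apply/negPn/negP => nz.
    have [L hL] := exists_LM nz.
    have hqL : q L != 0 by case/andP: hL.
    have : L \in SM I.
      move: hqL; rewrite /q !ffunE.
      case: (boolP (L \in S)) => hLS; first by move=> _; exact: (subsetP hS).
      case: (boolP (L \in T)) => hLT; first by move=> _; exact: (subsetP hT).
      by rewrite subrr eqxx.
    rewrite inE => /negP; apply; apply/existsP; exists q.
    rewrite qI nz /=; apply/existsP; exists L; rewrite hL /mdvd subxx.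
    done.
  apply/setP => M; have := congr1 (fun X : bpoly n => X M) q0.
  rewrite /q !ffunE => /eqP; rewrite subr_eq0.
  by case: (M \in S); case: (M \in T).
have : (#|phi @: powerset (SM I)| <= #|powerset Vset|)%N.
  apply: subset_leq_card; apply/subsetP => X /imsetP[S _ ->].
  by rewrite inE; apply/subsetP => a; rewrite inE => /andP[].
rewrite (card_in_imset inj) !card_powerset leq_exp2l //.
Qed.
End Null.
Section Spec.
Variable n : nat.
Variable Q : {set {set 'I_n}}.

Definition blkset (blk : 'I_n -> bvar n) (a : bmon n) : {set 'I_n} := [set i | blk i \in a].

Lemma ev_xi_ne blk A a : A != blkset blk a -> ev (xi blk A) a = 0.
Proof.
move=> ne.
have [i hi] : exists i, (i \in A) != (blk i \in a).
  apply/existsP; apply: contraNT ne => /existsPn h.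
  by apply/eqP/setP => i; rewrite inE; have := h i; rewrite negbK => /eqP.
rewrite /xi ev_prod (bigD1 i) //= !ev_add ev_one ev_X ev_const.
move: hi; case: (i \in A); case: (blk i \in a) => //= _.
  by rewrite ?addr0 ?add0r F2_11 mul0r.
by rewrite ?addr0 ?add0r F2_11 mul0r.
Qed.

Lemma ev_xiFam blk a : ev (xiFam blk Q) a = 0 -> blkset blk a \in Q.
Proof.
move=> e; apply/negPn/negP => nQ; move: e; rewrite /xiFam ev_prod big1.
  by move/eqP; rewrite (negbTE F2_10).
move=> A hA; rewrite ev_add ev_one ev_xi_ne ?add0r //.
by apply/eqP => eA; move: nQ; rewrite -eA; move: hA => /= ->.
Qed.

Lemma ev_sigma a : ev (sigma n) a = 0 -> blkset inl a :&: blkset inr a != set0.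
Proof.
move=> e3; apply/negP => /eqP e; move: e3.
rewrite /sigma ev_prod big1; first by move/eqP; rewrite (negbTE F2_10).
move=> i _.
rewrite ev_add ev_mul !ev_X ev_one.
have : i \notin blkset inl a :&: blkset inr a by rewrite e inE.
rewrite !inE; case: (inl i \in a); case: (inr i \in a) => //= _;
  by rewrite ?mulr0 ?mul0r ?add0r.
Qed.
End Spec.

Theorem mainTheorem1 (n : nat) (Q F : {set {set 'I_n}}) (G : {set bpoly n}) :
  fail_prone F ->
  is_groebner G (in_ideal3 (xiFam (@inl _ _) Q) (xiFam (@inr _ _) Q) (sigma n)) ->
  #|SM (in_ideal3 (xiFam (@inl _ _) Q) (xiFam (@inr _ _) Q) (sigma n))| = (#|Q| ^ 2)%N ->
  forall Q1 Q2, Q1 \in Q -> Q2 \in Q -> Q1 :&: Q2 != set0.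
Proof.
move=> _ _ hcard Q1 Q2 h1 h2; apply/negP => /eqP e12.
have le := SM_le (xiFam (@inl _ _) Q) (xiFam (@inr _ _) Q) (sigma n).
rewrite hcard in le.
pose psi (a : bmon n) := (blkset inl a, blkset inr a).
have inj : injective psi.
  move=> a b [ea eb]; apply/setP => -[i|i].
    by move/setP/(_ i): ea; rewrite !inE.
  by move/setP/(_ i): eb; rewrite !inE.
set V := Vset _ _ _ in le.
have sub : psi @: V \subset (setX Q Q :\ (Q1, Q2)).
  apply/subsetP => p /imsetP[a aV ->].
  move: aV; rewrite inE => /andP[/andP[/eqP e1 /eqP e2] /eqP e3].
  rewrite !inE /= (ev_xiFam e1) (ev_xiFam e2) andbT.
  rewrite andbT; apply/negP => /eqP [E1 E2].
  by move: (ev_sigma e3); rewrite E1 E2 e12 eqxx.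
have := subset_leq_card sub; rewrite (card_imset _ inj).
have hc := cardsD1 (Q1, Q2) (setX Q Q); rewrite cardsX inE /= h1 h2 /= in hc.
move=> hV; have := leq_trans le hV.
by rewrite expnS expn1 hc add1n ltnn.
Qed.
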